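(* Let $1\le p<\infty$, let $w$ be a weight, and let $\mathcal B$ be a collection of balls in $\mathbb{R}^n$ whose union is $\mathbb{R}^n$. If the maximal operator $M_{\mathcal B}$ is bounded from $\mathcal M^{p}(\varphi,w)$ to $W\mathcal M^{p}(\varphi,w)$ (in particular, if it is bounded on $\mathcal M^{p}(\varphi,w)$), then $w\in A_{\mathcal B}(\mathcal M^{p}(\varphi))$. Moreover, the operator norm of $M_{\mathcal B}$ from $\mathcal M^{p}(\varphi,w)$ to $W\mathcal M^{p}(\varphi,w)$ is bounded below by $[w]_{A_{\mathcal B}(\mathcal M^{p}(\varphi))}$.
   Context: A weight is a nonnegative locally integrable function on $\mathbb{R}^n$. Let $\varphi$ be a function from the set of Euclidean balls of $\mathbb{R}^n$ to $(0,\infty)$; standing assumptions: $\varphi$ is doubling ($\varphi(2B)\le C\varphi(B)$) and reverse doubling (there are $\delta>0$, $C$ with $\varphi(B_1)/\varphi(B_2)\le C(|B_1|/|B_2|)^\delta$ for balls $B_1\subset B_2$), and characteristic functions of balls belong to $\mathcal M^{p}(\varphi,w)$. $\mathcal M^{p}(\varphi,w)$ is the space of measurable $f$ with $\|f\|_{\mathcal M^{p}(\varphi,w)}:=\sup_B\big(\varphi(B)^{-1}\int_B|f|^pw\big)^{1/p}<\infty$ (supremum over all balls). $W\mathcal M^{p}(\varphi,w)$ is the space of measurable $f$ with $\|f\|_{W\mathcal M^{p}(\varphi,w)}:=\sup_B\sup_{t>0} t\, w(\{x\in B:|f(x)|>t\})^{1/p}\varphi(B)^{-1/p}<\infty$.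 For a Banach lattice $X$, the Köthe dual $X'$ has norm $\|g\|_{X'}:=\sup\{\int|fg|:\|f\|_X\le1\}$. $M_{\mathcal B}f(x):=\sup\{|B|^{-1}\int_B|f|: x\in B\in\mathcal B\}$. $[w]_{A_{\mathcal B}(\mathcal M^{p}(\varphi))}:=\sup_{B\in\mathcal B}\|\chi_B\|_{\mathcal M^{p}(\varphi,w)}\|\chi_B\|_{\mathcal M^{p}(\varphi,w)'}/|B|$, and $A_{\mathcal B}(\mathcal M^{p}(\varphi))$ is the class of weights for which it is finite. *)

(* Defs.v *)
(* R^n is modelled as [n.-tuple R] with its
   canonical product (Borel) sigma-algebra; the Lebesgue measure is an
   explicit measure [mu] characterised by its values on boxes (see
   [is_lebesgue_measure]). *)
From HB Require Import structures.
From mathcomp Require Import all_boot all_order all_algebra.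
From mathcomp Require Import all_classical all_reals all_analysis.
Set Implicit Arguments. Unset Strict Implicit. Unset Printing Implicit Defensive.
Import Order.TTheory GRing.Theory Num.Theory.
Import numFieldNormedType.Exports.
Local Open Scope classical_set_scope.
Local Open Scope ring_scope.

Section Defs.
Variable R : realType.
Variable n : nat.
Local Notation T := (n.-tuple R).

Definition eball (c : T) (r : R) : set T :=
  [set x | \sum_(i < n) (tnth x i - tnth c i) ^+ 2 < r ^+ 2].

Definition is_eball (B : set T) : Prop :=
  exists c : T, exists r : R, 0 < r /\ B = eball c r.

Definition box (a b : T) : set T :=
  [set x | forall i : 'I_n, tnth a i <= tnth x i <= tnth b i].

Definition is_lebesgue_measure (mu : {measure set T -> \bar R}) : Prop :=
  forall a b : T, (forall i : 'I_n, tnth a i <= tnth b i) ->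
    mu (box a b) = (\prod_(i < n) (tnth b i - tnth a i))%:E.

Variable mu : {measure set T -> \bar R}.

Definition is_weight (w : T -> R) : Prop :=
  [/\ forall x, 0 <= w x, measurable_fun setT w &
      forall c r, 0 < r -> mu.-integrable (eball c r) (EFin \o w)].

Definition wmeas (w : T -> R) (E : set T) : \bar R :=
  (\int[mu]_(x in E) (w x)%:E)%E.

Definition doubling (phi : set T -> R) : Prop :=
  exists C : R, forall c r, 0 < r -> phi (eball c (2 * r)) <= C * phi (eball c r).

Definition reverse_doubling (phi : set T -> R) : Prop :=
  exists delta : R, exists C : R, 0 < delta /\
    forall B1 B2, is_eball B1 -> is_eball B2 -> B1 `<=` B2 ->
      phi B1 / phi B2 <= C * (fine (mu B1) / fine (mu B2)) `^ delta.

Definition morrey_norm (p : R) (phi : set T -> R) (w : T -> R) (f : T -> R)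
  : \bar R :=
  ((ereal_sup [set ((phi B)^-1)%:E *
                  \int[mu]_(x in B) ((`|f x| `^ p) * w x)%:E
              | B in is_eball]) `^ p^-1)%E.

Definition weak_term (p : R) (phi : set T -> R) (w : T -> R)
  (F : T -> \bar R) (B : set T) (t : R) : \bar R :=
  (t%:E * (wmeas w [set x | B x /\ (t%:E < `|F x|)%E]) `^ p^-1
     * ((phi B) `^ (- p^-1))%:E)%E.

Definition weak_morrey_norm (p : R) (phi : set T -> R) (w : T -> R)
  (F : T -> \bar R) : \bar R :=
  ereal_sup [set weak_term p phi w F Bt.1 Bt.2
            | Bt in [set Bt : set T * R | is_eball Bt.1 /\ 0 < Bt.2]].

Definition kothe_norm (N : (T -> R) -> \bar R) (g : T -> R) : \bar R :=
  ereal_sup [set (\int[mu]_x (`|f x * g x|)%:E)%E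
            | f in [set f : T -> R | measurable_fun setT f /\ (N f <= 1)%E]].

Definition maximal_op (Bs : set (set T)) (f : T -> R) (x : T) : \bar R :=
  ereal_sup [set (((fine (mu B))^-1)%:E * \int[mu]_(y in B) (`|f y|)%:E)%E
            | B in [set B | Bs B /\ B x]].

Definition chiB (B : set T) : T -> R := fun x => \1_B x.

Definition ABconst (Bs : set (set T)) (p : R) (phi : set T -> R) (w : T -> R)
  : \bar R :=
  ereal_sup [set (morrey_norm p phi w (chiB B)
                  * kothe_norm (morrey_norm p phi w) (chiB B)
                  * ((fine (mu B))^-1)%:E)%E
            | B in Bs].

(* operator norm of M_Bs : M^p(phi,w) -> WM^p(phi,w) (inf of admissible
   constants; +oo if there is none) *)
Definition maximal_opnorm (Bs : set (set T)) (p : R) (phi : set T -> R)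
  (w : T -> R) : \bar R :=
  ereal_inf [set C%:E | C in [set C : R | 0 <= C /\
      forall f : T -> R, measurable_fun setT f ->
        (morrey_norm p phi w f < +oo)%E ->
        (weak_morrey_norm p phi w (maximal_op Bs f)
           <= C%:E * morrey_norm p phi w f)%E]].

End Defs.

(* Main.v *)
Require Import Defs.
From HB Require Import structures.
From mathcomp Require Import all_boot all_order all_algebra.
From mathcomp Require Import all_classical all_reals all_analysis.
From mathcomp Require Import ring lra.
Import Order.TTheory GRing.Theory Num.Theory.
Local Open Scope classical_set_scope.
Local Open Scope ring_scope.

Section Hs.
Context {R : realType}.
Local Open Scope ereal_scope.

Lemma dense_le (A : \bar R) (c : R) : (0 <= c)%R ->
  (forall t : R, (0 < t)%R -> t%:E < A -> (t <= c)%R) -> A <= c%:E.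
Proof.
move=> c0 H; rewrite leNgt; apply/negP => cA.
case: A cA H => [r| |] //.
- rewrite lte_fin => cr H.
  have := H ((c + r) / 2)%R.
  have h1 : (0 < (c + r) / 2)%R by apply: divr_gt0 => //; apply: (le_lt_trans c0); lra.
  have h2 : (((c + r) / 2)%R)%:E < r%:E by rewrite lte_fin; lra.
  move=> /(_ h1 h2); lra.
- move=> _ H; have := H (c + 1)%R; rewrite ltry.
  have h1 : (0 < c + 1)%R by lra.
  move=> /(_ h1 isT); lra.
Qed.

Lemma le_integral_nm d (T : measurableType d) (mu : {measure set T -> \bar R})
  (D E : set T) (f g : T -> \bar R) :
  (forall x, D x -> 0 <= f x) -> (forall x, E x -> 0 <= g x) ->
  (forall x, (f \_ D) x <= (g \_ E) x) ->
  \int[mu]_(x in D) f x <= \int[mu]_(x in E) g x.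
Proof.
move=> f0 g0 fg; rewrite (ge0_integralE mu f0) (ge0_integralE mu g0).
apply: ge_ereal_sup => _ [h hf <-]; apply: ereal_sup_ubound; exists h => //.
by move=> x; apply: le_trans (hf x) (fg x).
Qed.

End Hs.


Lemma main_le (R : realType) (n : nat)
  (mu : {measure set (n.-tuple R) -> \bar R})
  (phi : set (n.-tuple R) -> R)
  (hphi_pos : forall B : set (n.-tuple R), is_eball B -> 0 < phi B)
  (p : R) (hp : 1 <= p)
  (w : n.-tuple R -> R) (w0 : forall x, 0 <= w x)
  (hchi : forall B : set (n.-tuple R), is_eball B -> (morrey_norm mu p phi w (chiB B) < +oo)%E)
  (Bs : set (set (n.-tuple R)))
  (hBs : forall B : set (n.-tuple R), Bs B -> is_eball B)
  (B : set (n.-tuple R)) (BsB : Bs B) (C : R) (C0 : 0 <= C)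
  (HC : forall f : n.-tuple R -> R, measurable_fun setT f ->
        (morrey_norm mu p phi w f < +oo)%E ->
        (weak_morrey_norm mu p phi w (maximal_op mu Bs f)
           <= C%:E * morrey_norm mu p phi w f)%E) :
  (morrey_norm mu p phi w (chiB B) * kothe_norm mu (morrey_norm mu p phi w) (chiB B)
     * ((fine (mu B))^-1)%:E <= C%:E)%E.
Proof.
have p0 : 0 < p by lra.
have pn0 : p != 0 by rewrite gt_eqF.
have ip0 : 0 < p^-1 by rewrite invr_gt0.
have ipn0 : p^-1 != 0 by rewrite gt_eqF.
set m := fine (mu B).
have m0 : 0 <= m by apply: fine_ge0; apply: measure_ge0.
have [->|mn0] := eqVneq m 0; first by rewrite invr0 mule0 lee_fin.
have mpos : 0 < m by rewrite lt_def mn0 m0.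
have Bb := hBs B BsB.
set a' := morrey_norm mu p phi w (chiB B).
have a_fin : a' \is a fin_num.
  by rewrite ge0_fin_numE ?hchi //; apply: poweR_ge0.
rewrite -(fineK a_fin).
set a := fine a'.
have a0 : 0 <= a by apply: fine_ge0; apply: poweR_ge0.
have [->|an0] := eqVneq a 0; first by rewrite !mul0e lee_fin.
have apos : 0 < a by rewrite lt_def an0 a0.
have amp : 0 < a * m^-1 by rewrite divr_gt0.
rewrite (muleC a%:E) -muleA -EFinM -lee_pdivlMr // -EFinM.
apply: ge_ereal_sup => _ [f [mf nf] <-].
apply: dense_le; first by rewrite mulr_ge0 // invr_ge0 ltW.
move=> t t0 tI.
set s := t / m.
have spos : 0 < s by rewrite divr_gt0.
suff sa : s * a <= C.
  have e : C * (a * m^-1)^-1 - t = (C - s * a) * (m / a).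
    by rewrite /s; field; rewrite an0 mn0.
  by rewrite -subr_ge0 e mulr_ge0 ?subr_ge0 // divr_ge0 // ltW.

have hs : forall x, B x -> (s%:E < `|maximal_op mu Bs f x|)%E.
  move=> x Bx.
  have I_eq : (\int[mu]_x (`|f x * chiB B x|)%:E = \int[mu]_(y in B) (`|f y|)%:E)%E.
    rewrite [RHS]integral_mkcond; apply: eq_integral => y _.
    by rewrite /patch /chiB indicE; case: ifP => _; rewrite ?mulr1 ?mulr0 ?normr0.
  apply: (lt_le_trans _ (lee_abs _)).
  have h1 : (s%:E < (\int[mu]_x (`|f x * chiB B x|)%:E) * (m^-1)%:E)%E.
    by rewrite /s EFinM lte_pmul2r // lte_fin invr_gt0.
  apply: (lt_le_trans h1); apply: ereal_sup_ubound; exists B => //.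
  by rewrite muleC I_eq.
rewrite -(ler_pdivlMl _ _ spos) -lee_fin /a fineK //.
set K := s^-1 * C.
have K0 : 0 <= K by rewrite mulr_ge0 // invr_ge0 ltW.
rewrite /a' /morrey_norm.
set X := ereal_sup _.
have Yge0 : forall B', is_eball B' -> (0 <= ((phi B')^-1)%:E *
     \int[mu]_(x in B') ((`|chiB B x| `^ p) * w x)%:E)%E.
  move=> B' B'b; apply: mule_ge0; first by rewrite lee_fin invr_ge0 ltW ?hphi_pos.
  by apply: integral_ge0 => x _; rewrite lee_fin mulr_ge0 ?powR_ge0.
have X0 : (0 <= X)%E.
  by apply: le_trans (Yge0 B Bb) _; apply: ereal_sup_ubound; exists B.
have Xle : (X <= (K `^ p)%:E)%E.
  apply: ge_ereal_sup => _ [B' B'b <-].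
  set J := (\int[mu]_(x in B') _)%E.
  have J0 : (0 <= J)%E by apply: integral_ge0 => x _; rewrite lee_fin mulr_ge0 ?powR_ge0.
  have phiB' := hphi_pos B' B'b.
  have YE := Yge0 B' B'b.
  rewrite -[X in (X <= _)%E](poweRe1 YE) -(mulVf pn0) poweRrM.
  suff h : ((((phi B')^-1)%:E * J) `^ p^-1 <= K%:E)%E.
    rewrite -poweR_EFin; apply: (gt0_ler_poweR (ltW p0)) => //;
      rewrite in_itv /= ?leey ?andbT ?poweR_ge0 //.
  rewrite poweRM ?lee_fin ?invr_ge0 ?(ltW phiB') // poweR_EFin.
  rewrite -powR_inv1 ?(ltW phiB') // -powRrM mulN1r.
  set S := [set x | B' x /\ (s%:E < `|maximal_op mu Bs f x|)%E].
  set W := wmeas mu w S.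
  have hw' : (s%:E * W `^ p^-1 * (phi B' `^ (- p^-1))%:E <= C%:E)%E.
    apply: (@le_trans _ _ (weak_morrey_norm mu p phi w (maximal_op mu Bs f))).
      by apply: ereal_sup_ubound; exists (B', s).
    apply: le_trans (HC f mf (le_lt_trans nf (ltry _))) _.
    by rewrite -[X in (_ <= X)%E](mule1 C%:E); apply: lee_wpmul2l; rewrite ?lee_fin.
  have JW : (J <= W)%E.
    apply: le_integral_nm.
    - by move=> x _; rewrite lee_fin mulr_ge0 ?powR_ge0.
    - by move=> x _; rewrite lee_fin.
    move=> x; rewrite /patch; case: ifPn => xB'; case: ifPn => xS.
    - by rewrite lee_fin /chiB indicE; case: (x \in B);
        rewrite ?normr1 ?normr0 ?powR1 ?powR0 // ?mul1r ?mul0r.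
    - have nB : (x \in B) = false.
        apply/negbTE/negP; rewrite in_setE => Bx; move/negP: xS; apply.
        by rewrite in_setE; split; [rewrite -in_setE | exact: hs].
      by rewrite /chiB indicE nB normr0 powR0 // mul0r.
    - by rewrite lee_fin.
    - by [].
  have JWp : (J `^ p^-1 <= W `^ p^-1)%E.
    apply: (gt0_ler_poweR (ltW ip0)) => //; rewrite in_itv /= ?leey ?andbT //.
    exact: le_trans JW.
  rewrite EFinM lee_pdivlMl //.
  apply: le_trans hw'.
  apply: (@le_trans _ _ (s%:E * ((phi B' `^ (- p^-1))%:E * W `^ p^-1))%E).
    by apply: lee_wpmul2l; rewrite ?lee_fin ?(ltW spos) //; apply: lee_wpmul2l; rewrite ?lee_fin ?powR_ge0.
  by rewrite -muleA (muleC (W `^ _)).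
apply: (le_trans (gt0_ler_poweR (ltW ip0) _ _ Xle)).
- by rewrite in_itv /= leey andbT.
- by rewrite in_itv /= leey andbT lee_fin powR_ge0.
by rewrite poweR_EFin -powRrM mulfV // powRr1.
Qed.

Theorem theorem3p1 (R : realType) (n : nat) (hn : (0 < n)%N)
  (mu : {measure set (n.-tuple R) -> \bar R})
  (hmu : is_lebesgue_measure mu)
  (phi : set (n.-tuple R) -> R)
  (hphi_pos : forall B : set (n.-tuple R), is_eball B -> 0 < phi B)
  (hphi_doubling : doubling phi)
  (hphi_rev : reverse_doubling mu phi)
  (p : R) (hp : 1 <= p)
  (w : n.-tuple R -> R) (hw : is_weight mu w)
  (hchi : forall B : set (n.-tuple R), is_eball B -> (morrey_norm mu p phi w (chiB B) < +oo)%E)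
  (Bs : set (set (n.-tuple R)))
  (hBs : forall B : set (n.-tuple R), Bs B -> is_eball B)
  (hcover : \bigcup_(B in Bs) B = setT)
  (hbounded : (maximal_opnorm mu Bs p phi w < +oo)%E) :
  (ABconst mu Bs p phi w < +oo)%E /\
  (ABconst mu Bs p phi w <= maximal_opnorm mu Bs p phi w)%E.
Proof.
have [w0 _ _] := hw.
have key : (ABconst mu Bs p phi w <= maximal_opnorm mu Bs p phi w)%E.
  apply: ge_ereal_sup => _ [B BsB <-].
  apply: le_ereal_inf_tmp => _ [C [C0 HC] <-].
  exact: (@main_le R n mu phi hphi_pos p hp w w0 hchi Bs hBs B BsB C C0 HC).
by split => //; apply: le_lt_trans key hbounded.
Qed.
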